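(* Let $n\geq 4$. Then $d_{\Gamma_n}=2J-A_{\Gamma_n}$, where $A_{\Gamma_n}$ is the adjacency matrix of $\Gamma_n$ and $J$ is the $n!\times n!$ matrix with zero diagonal and all off-diagonal entries equal to $1$. Consequently, if $\eta_1=D_n,\eta_2,\dots,\eta_{n!}$ is the adjacency spectrum of $\Gamma_n$ (with $\eta_1=D_n$ the eigenvalue of the all-ones eigenvector), then the distance spectrum of $\Gamma_n$ is \[\{2(n!-1)-\eta_1,\,-2-\eta_2,\,\dots,\,-2-\eta_{n!}\}.\] In representation-theoretic terms, $\gamma_{(n)}=2(n!-1)-D_n$ and $\gamma_\lambda=-2-\eta_\lambda$ for every partition $\lambda\vdash n$ with $\lambda\neq(n)$.
   Context: $\mathfrak{S}_n$ is the symmetric group, $D_n$ denotes both the set of derangements in $\mathfrak{S}_n$ and its cardinality. The derangement graph $\Gamma_n$ has vertex set $\mathfrak{S}_n$, with $w$ adjacent to $sw$ for $s\in D_n$; $d_{\Gamma_n}$ is its distance matrix. Irreducible characters of $\mathfrak{S}_n$ are indexed by partitions $\lambda\vdash n$, denoted $\chi_\lambda$, with $f_\lambda=\chi_\lambda(1)$; $(n)$ is the trivial character. Define $\eta_\lambda=\frac{1}{f_\lambda}\sum_{w\in D_n}\chi_\lambda(w)$ (the eigenvalue of $A_{\Gamma_n}$ on the $\lambda$-isotypic component, of multiplicity $f_\lambda^2$), and $\gamma_\lambda=\frac{1}{f_\lambda}\sum_{w\neq 1}\ell_D(w)\chi_\lambda(w)$, where $\ell_D(w)$ is the minimal number of derangements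 whose product is $w$. *)

(* Defs.v *)
From HB Require Import structures.
From mathcomp Require Import all_boot all_order all_algebra all_fingroup all_solvable all_field all_character.
Set Implicit Arguments. Unset Strict Implicit. Unset Printing Implicit Defensive.
Import GRing.Theory Num.Theory.

Definition walkb (T : finType) (e : rel T) (x y : T) (k : nat) : bool :=
  [exists p : k.-tuple T, path e x p && (last x p == y)].

(* In a graph on
   #|T| vertices any reachable vertex is at distance < #|T|; unreachable
   vertices get the conventional value #|T| (never used for n >= 4). *)
Definition gdist (T : finType) (e : rel T) (x y : T) : nat :=
  find (walkb e x y) (iota 0 #|T|).

Definition derangement n (s : 'S_n) : bool := [forall i, s i != i].

Definition Dset n : {set 'S_n} := [set s | derangement s].

Definition dadj n : rel 'S_n := fun w w' => ((w' * w^-1)%g \in Dset n).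

(* vertices of Gamma_n enumerated by 'I_(n!) (well, 'I_#|'S_n|) *)
Definition pv n (i : 'I_#|{perm 'I_n}|) : 'S_n := enum_val i.

Local Open Scope ring_scope.

Definition Amat n : 'M[algC]_(#|{perm 'I_n}|) :=
  \matrix_(i, j) ((dadj (pv i) (pv j))%:R).

Definition dmat n : 'M[algC]_(#|{perm 'I_n}|) :=
  \matrix_(i, j) ((gdist (@dadj n) (pv i) (pv j))%:R).

Definition Jmat N : 'M[algC]_N := \matrix_(i, j) ((i != j)%:R).

(* minimal number of derangements whose product is w (bound #|'S_n| is only a
   search cutoff; value #|'S_n| means "not expressible") *)
Definition lD n (w : 'S_n) : nat :=
  find (fun k => [exists t : k.-tuple 'S_n,
                    all (mem (Dset n)) t && ((\prod_(s <- t) s)%g == w)])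
       (iota 0 #|{perm 'I_n}|).

Definition SG n := [set: 'S_n]%G.

Definition eta_char n (i : Iirr (SG n)) : algC :=
  (\sum_(w in Dset n) 'chi[SG n]_i w) / 'chi[SG n]_i 1%g.

Definition gamma_char n (i : Iirr (SG n)) : algC :=
  (\sum_(w : 'S_n | w != 1%g) (lD w)%:R * 'chi[SG n]_i w) / 'chi[SG n]_i 1%g.

(* Main.v *)
Require Import Defs.
From HB Require Import structures.
From mathcomp Require Import all_boot all_order all_algebra all_fingroup all_solvable all_field all_character.
Import GRing.Theory Num.Theory.
Local Open Scope ring_scope.
From mathcomp Require Import zify.
From mathcomp Require Import ring.


Definition rot m (k : 'I_(m.+4)) : 'S_(m.+4) := perm (@addIr _ k).
Arguments rot {m}.

Lemma rotE m (k i : 'I_(m.+4)) : rot k i = i + k.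
Proof. by rewrite /rot permE. Qed.

Lemma addr_neq m (i k : 'I_(m.+4)) : k != 0 -> i + k != i.
Proof.
move=> hk; apply/eqP => h; move/eqP: hk; apply.
by apply: (@addrI _ i); rewrite h addr0.
Qed.

Lemma exists_t m (u : 'S_(m.+4)) :
  exists t : 'S_(m.+4), derangement t /\ forall i, t i != u i.
Proof.
pose C k := [set i | u i == i + k].
have sumC : (\sum_k #|C k| = m.+4)%N.
  transitivity (\sum_k \sum_i nat_of_bool (u i == (i + k)%R))%N.
    apply: eq_bigr => k _; rewrite -sum1_card big_mkcond /=.
    by apply: eq_bigr => i _; rewrite inE; case: (_ == _).
  rewrite exchange_big /=.
  transitivity (\sum_(i : 'I_(m.+4)) 1)%N; last by rewrite sum1_card card_ord.
  apply: eq_bigr => i _.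
  rewrite (bigD1 (u i - i)) //= addrC subrK eqxx big1 // => k hk.
  case: eqP => // h.
  have hh : u i - i = k by rewrite h addrC addKr.
  by rewrite hh eqxx in hk.
have : [exists k : 'I_(m.+4), (k != 0) && (#|C k| <= 1)%N].
  rewrite -[X in is_true X]negbK; apply/negP => /existsPn H.
  have : (2 * m.+3 <= m.+4)%N; last by move=> ?; lia.
  rewrite -{1}sumC (bigD1 0) //=.
  apply: leq_trans (leq_addl _ _).
  apply: (@leq_trans (\sum_(k : 'I_(m.+4) | k != 0%R) 2)%N).
    rewrite sum_nat_const mulnC.
    have -> : #|[pred k : 'I_(m.+4) | k != 0%R]| = #|predC1 (0 : 'I_(m.+4))| by apply: eq_card.
    by rewrite cardC1 card_ord.
  apply: leq_sum => k /= hk.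
  by move: (H k); rewrite hk /= -ltnNge.
case/existsP => k /andP [hk0 hk1].
have [C0 | C1] : (#|C k| = 0 \/ #|C k| = 1)%N by case: #|C k| hk1 => [|[|]]; auto.
  exists (rot k); split.
    by apply/forallP => i; rewrite rotE addr_neq.
  move=> i; rewrite rotE; move/eqP: C0; rewrite cards_eq0 => /eqP C0.
  apply/eqP => h.
  have : i \in C k by rewrite inE h.
  by rewrite C0 inE.
have [i0 Hi0] := cards1P (introT eqP C1).
have Hu0 : u i0 = i0 + k.
  have : i0 \in C k by rewrite Hi0 inE.
  by rewrite inE => /eqP.
have [j Hj] : exists j, j \notin [:: i0; i0 - k; i0 + k].
  apply/existsP; rewrite -[X in is_true X]negbK; apply/negP => /existsPn H.
  have : (#|'I_(m.+4)| <= size [:: i0; (i0 - k)%R; (i0 + k)%R])%N.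
    apply: leq_trans (card_size _).
    apply: subset_leq_card; apply/subsetP => x _.
    by move: (H x); rewrite negbK.
  by rewrite card_ord.
move: Hj; rewrite !inE !negb_or => /and3P [hj1 hj2 hj3].
exists (tperm i0 j * rot k)%g; split.
  apply/forallP => x; rewrite permM rotE.
  case: tpermP => [-> | -> | ? ?].
  - apply/eqP => h; move/eqP: hj2; apply; by rewrite -h addrK.
  - by rewrite eq_sym.
  - by rewrite addr_neq.
move=> x; rewrite permM rotE.
case: tpermP => [-> | -> | h1 h2].
- rewrite Hu0; apply/eqP => h; move/eqP: hj1; apply.
  by apply: (@addIr _ k).
- rewrite -Hu0; apply/eqP => /perm_inj h.
  by move/eqP: hj1; apply.
- apply/eqP => h.
  have : x \in C k by rewrite inE h.
  by rewrite Hi0 inE; apply/negP/eqP.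
Qed.

Lemma decomp n (hn : (4 <= n)%N) (w : 'S_n) :
  exists a b, a \in Dset n /\ b \in Dset n /\ w = (a * b)%g.
Proof.
have [m em] : exists m, n = m.+4 by exists (n - 4)%N; lia.
subst n.
have [t [Ht Htw]] := @exists_t m w.
exists t, (t^-1 * w)%g; split; first by rewrite inE.
split; last by rewrite mulgA mulgV mul1g.
rewrite inE; apply/forallP => x; rewrite permM.
have := Htw (t^-1%g x); rewrite permKV.
by rewrite eq_sym.
Qed.

Set Implicit Arguments. Unset Strict Implicit.


Lemma find_iota_eq (P : pred nat) k N : (k < N)%N -> P k ->
  (forall i, (i < k)%N -> ~~ P i) -> find P (iota 0 N) = k.
Proof.
move=> hkN hPk hlt.
have -> : N = (k + (N - k).-1.+1)%N by lia.
rewrite iotaD find_cat.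
have -> : has P (iota 0 k) = false.
  apply/negbTE/hasPn => i; rewrite mem_iota => /andP [_ hi]; exact: hlt.
by rewrite size_iota /= add0n hPk addn0.
Qed.

Lemma walkb0 (T : finType) (e : rel T) x y : walkb e x y 0 = (x == y).
Proof.
apply/existsP/idP => [[p] | /eqP ->].
  by rewrite (tuple0 p) /=.
by exists [tuple]; rewrite /= eqxx.
Qed.

Lemma walkb1 (T : finType) (e : rel T) x y : walkb e x y 1 = e x y.
Proof.
apply/existsP/idP => [[[[|z [|]] //= _]] | h].
  by rewrite andbT => /andP [h /eqP <-].
by exists [tuple y]; rewrite /= h eqxx.
Qed.

Lemma walkb2 (T : finType) (e : rel T) x y z : e x z -> e z y -> walkb e x y 2.
Proof.
move=> h1 h2; apply/existsP.
by exists [tuple z; y]; rewrite /= h1 h2 eqxx.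
Qed.

Lemma gdist0 (T : finType) (e : rel T) x : (0 < #|T|)%N -> gdist e x x = 0%N.
Proof.
move=> h; apply: find_iota_eq => //; first by rewrite walkb0.
Qed.

Lemma gdist1 (T : finType) (e : rel T) x y : (1 < #|T|)%N -> x != y -> e x y ->
  gdist e x y = 1%N.
Proof.
move=> h hxy hexy; apply: find_iota_eq => //; first by rewrite walkb1.
by move=> [|i] // _; rewrite walkb0.
Qed.

Lemma gdist2 (T : finType) (e : rel T) x y z : (2 < #|T|)%N -> x != y -> ~~ e x y ->
  e x z -> e z y -> gdist e x y = 2%N.
Proof.
move=> h hxy hexy h1 h2; apply: find_iota_eq; [by [] | exact: (walkb2 h1 h2) | ].
move=> [|[|i]] // _; rewrite ?walkb0 ?walkb1 //.
Qed.
Lemma cardSn_ge n : (4 <= n)%N -> (3 < #|{perm 'I_n}|)%N.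
Proof.
move=> hn; rewrite card_Sn.
have [m ->] : exists m, n = m.+4 by exists (n - 4)%N; lia.
by rewrite factS; apply: leq_trans (leq_pmulr _ (fact_gt0 _)).
Qed.

Lemma one_notD n : (0 < n)%N -> (1%g : 'S_n) \notin Dset n.
Proof.
move=> hn; rewrite inE; apply/negP => /forallP /(_ (Ordinal hn)).
by rewrite perm1 eqxx.
Qed.

Lemma dmat_eq n (hn : (4 <= n)%N) : dmat n = 2%:R *: Jmat #|{perm 'I_n}| - Amat n.
Proof.
have hc := cardSn_ge hn.
apply/matrixP => i j; rewrite !mxE.
case: (eqVneq i j) => [<- | hij].
  rewrite gdist0 ?(leq_trans _ hc) // /dadj mulgV.
  by rewrite (negbTE (one_notD _)) ?(leq_trans _ hn) // mulr0 subr0.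
have hp : pv i != pv j by rewrite /pv (inj_eq enum_val_inj).
rewrite mulr1.
case hd: (dadj (pv i) (pv j)).
  by rewrite gdist1 ?(leq_trans _ hc) // -addrA subrr addr0.
have [a [b [ha [hb hw]]]] := @decomp n hn (pv j * (pv i)^-1)%g.
rewrite (@gdist2 _ _ _ _ (b * pv i)%g) ?(leq_trans _ hc) ?hd // ?subr0.
- by [].
- by rewrite /dadj /= mulgK.
- by rewrite /dadj /= invMg mulgA hw mulgK.
Qed.


Lemma lD_val n (hn : (4 <= n)%N) (w : 'S_n) : w != 1%g ->
  (lD w)%:R = 2%:R - (w \in Dset n)%:R :> algC.
Proof.
move=> hw1.
have hc := cardSn_ge hn.
have P0 : ~~ [exists t : 0.-tuple 'S_n, all (mem (Dset n)) t && ((\prod_(s <- t) s)%g == w)].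
  apply/existsPn => t; rewrite (tuple0 t) /= big_nil.
  by rewrite eq_sym.
case hD: (w \in Dset n).
  rewrite /lD (@find_iota_eq _ 1) ?(leq_trans _ hc) //.
  - by rewrite -addrA subrr addr0.
  - apply/existsP; exists [tuple w]; rewrite /= hD big_cons big_nil mulg1 eqxx.
    by [].
  - by case => // _.
rewrite /lD (@find_iota_eq _ 2) ?(leq_trans _ hc) //.
- by rewrite subr0.
- have [a [b [ha [hb hab]]]] := @decomp n hn w.
  apply/existsP; exists [tuple a; b].
  by rewrite /= ha hb !big_cons big_nil mulg1 hab eqxx.
- move=> [|[|i]] // _.
  apply/existsPn => t; case: t => [[|s [|]] //] Ht.
  rewrite /= big_cons big_nil mulg1 andbT.
  by apply/negP => /andP [hs /eqP hsw]; rewrite -hsw hs in hD.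
Qed.

Lemma lD_sum n (hn : (4 <= n)%N) (f : 'S_n -> algC) :
  \sum_(w : 'S_n | w != 1%g) (lD w)%:R * f w =
  2%:R * (\sum_w f w - f 1%g) - \sum_(w in Dset n) f w.
Proof.
have -> : \sum_w f w - f 1%g = \sum_(w | w != 1%g) f w.
  by rewrite [\sum_w f w](bigD1 1%g) // addrC addKr.
rewrite (eq_bigr (fun w => 2%:R * f w - (w \in Dset n)%:R * f w)); last first.
  by move=> w hw; rewrite lD_val // mulrBl.
rewrite sumrB -mulr_sumr; congr (_ - _).
rewrite [RHS]big_mkcond [LHS]big_mkcond.
apply: eq_bigr => w _.
case: (eqVneq w 1%g) => [-> | hw].
  by rewrite (negbTE (one_notD _)) ?(leq_trans _ hn) // mul0r.
by case: (w \in Dset n); rewrite ?mul1r ?mul0r.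
Qed.

Lemma gamma0 n (hn : (4 <= n)%N) :
  gamma_char (0 : Iirr (SG n)) = 2%:R * ((n`!)%:R - 1) - (#|Dset n|)%:R.
Proof.
have h1 : forall w, 'chi[SG n]_0 w = 1.
  by move=> w; rewrite irr0 cfun1E inE.
have e1 : \sum_w 'chi[SG n]_0 w = (n`!)%:R.
  by rewrite (eq_bigr (fun _ => 1)) // sumr_const card_Sn.
have e2 : \sum_(w in Dset n) 'chi[SG n]_0 w = (#|Dset n|)%:R.
  by rewrite (eq_bigr (fun _ => 1)) // sumr_const.
by rewrite /gamma_char lD_sum // e1 e2 h1 divr1.
Qed.

Lemma gammai n (hn : (4 <= n)%N) (i : Iirr (SG n)) : i != 0 ->
  gamma_char i = (- 2%:R : algC) - eta_char i.
Proof.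
move=> hi.
have hsum : \sum_w 'chi[SG n]_i w = 0.
  have H := cfdot_irr i 0; rewrite (negbTE hi) cfdotE in H.
  have hG : (#|SG n|%:R : algC) != 0 by rewrite pnatr_eq0 -lt0n cardG_gt0.
  move/eqP: H; rewrite mulf_eq0 invr_eq0 (negbTE hG) /= => /eqP H.
  rewrite -[RHS]H.
  apply: eq_big => [x | x _]; first by rewrite inE.
  by rewrite irr0 cfun1E inE conjC1 mulr1.
rewrite /gamma_char /eta_char lD_sum // hsum sub0r.
rewrite mulrBl; congr (_ - _).
by rewrite mulrN mulNr -mulrA mulfV ?irr1_neq0 // mulr1.
Qed.


Lemma sylv (R : comNzRingType) N (a : R) (x : 'cV[R]_N) (y : 'rV[R]_N) :
  a * \det (a%:M + x *m y) = a ^+ N * (a + (y *m x) 0 0).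
Proof.
pose M := block_mx (a%:M : 'M_N) (- x) y (1%:M : 'M_1).
pose L := block_mx (1%:M : 'M_N) 0 (- y) (a%:M : 'M_1).
pose Q := block_mx (1%:M : 'M_N) 0 (- y) (1%:M : 'M_1).
have h1 : L *m M = block_mx (a%:M) (- x) 0 (y *m x + a%:M).
  rewrite mulmx_block !mul1mx !mul0mx !addr0 mulNmx mul_mx_scalar mul_scalar_mx.
  by rewrite addrC subrr mulmxN mulNmx opprK mulmx1.
have h2 : M *m Q = block_mx (a%:M + x *m y) (- x) 0 1%:M.
  by rewrite mulmx_block !mulmx1 !mulmx0 !mul1mx !add0r mulmxN mulNmx opprK subrr.
have dL : \det L = a by rewrite det_lblock det1 det_scalar1 mul1r.
have dQ : \det Q = 1 by rewrite det_lblock !det1 mul1r.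
have := congr1 determinant h1; rewrite det_mulmx dL det_ublock det_scalar.
have := congr1 determinant h2; rewrite det_mulmx dQ mulr1 det_ublock det1 mulr1.
move=> -> ->; rewrite det_mx11 !mxE eqxx mulr1n.
by rewrite addrC.
Qed.

Lemma rowsumA n (i : 'I_#|{perm 'I_n}|) : \sum_j Amat n i j = (#|Dset n|)%:R.
Proof.
set e := pv i.
pose F := fun w : 'S_n => ((w * e^-1)%g \in Dset n)%:R : algC.
rewrite (eq_bigr (fun j => F (pv j))); last by move=> j _; rewrite mxE.
have -> : \sum_j F (pv j) = \sum_w F w.
  symmetry; apply: reindex; apply: onW_bij; exact: enum_val_bij.
rewrite (reindex_inj (mulIg e)) /F.
rewrite (eq_bigr (fun w => if w \in Dset n then 1 else 0)); last first.
  by move=> w _; rewrite mulgK; case: (_ \in _).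
by rewrite -big_mkcond sumr_const.
Qed.


Lemma prod_sgn (s : seq algC) :
  \prod_(e <- s) (- 'X - 2%:P - e%:P) =
  (-1) ^+ size s * \prod_(e <- s) ('X - ((- 2%:R : algC) - e)%:P).
Proof.
elim: s => [|e s IH]; first by rewrite !big_nil expr0 mul1r.
rewrite !big_cons IH /= exprS.
rewrite rmorphB rmorphN /= rmorph_nat.
ring.
Qed.

Lemma charpoly_main N (A : 'M[algC]_N) (D : algC) (s : seq algC)
  (hrow : forall i, \sum_j A i j = D)
  (hA : char_poly A = ('X - D%:P) * \prod_(e <- s) ('X - e%:P)) :
  char_poly (2%:R *: Jmat N - A) =
  ('X - (2%:R * (N%:R - 1) - D)%:P) * \prod_(e <- s) ('X - ((- 2%:R : algC) - e)%:P).
Proof.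
pose u := const_mx 1 : 'cV[{poly algC}]_N.
pose v := const_mx 1 : 'rV[{poly algC}]_N.
pose lam := 'X + (2%:R + D)%:P : {poly algC}.
pose B := ('X + 2%:P)%:M + map_mx polyC A : 'M[{poly algC}]_N.
have hC : char_poly_mx (2%:R *: Jmat N - A) = B - 2%:P *: (u *m v).
  apply/matrixP => i j; rewrite !mxE big_ord1 !mxE.
  case: eqVneq => [-> | hij] /=.
    by rewrite !mulr1n mulr0 rmorphB /= rmorph0; ring.
  by rewrite !mulr0n mulr1 rmorphB /=; ring.
have hBu : B *m u = lam *: u.
  apply/matrixP => i j; rewrite mulmxDl mul_scalar_mx !mxE.
  rewrite (eq_bigr (fun k => (A i k)%:P)); last by move=> k _; rewrite !mxE mulr1.
  rewrite -rmorph_sum hrow /lam rmorphD /=; ring.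
have hvu : (v *m u) 0 0 = N%:R.
  rewrite !mxE (eq_bigr (fun _ => 1)); last by move=> k _; rewrite !mxE mulr1.
  by rewrite sumr_const card_ord.
have hd : B *m (lam%:M - 2%:P *: (u *m v)) = lam *: (B - 2%:P *: (u *m v)).
  rewrite mulmxBr mul_mx_scalar -scalemxAr mulmxA hBu -scalemxAl.
  by rewrite scalerBr !scalerA mulrC.
have lam_neq0 : lam != 0 by rewrite -size_poly_eq0 /lam size_XaddC.
have hsyl : lam * \det (lam%:M - 2%:P *: (u *m v)) = lam ^+ N * (lam - 2%:P * N%:R).
  have := sylv lam (- (2%:P) *: u) v.
  rewrite -scalemxAl scaleNr -scalemxAr mxE hvu mulNr.
  by [].
have hdet : \det B * \det (lam%:M - 2%:P *: (u *m v)) =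
    lam ^+ N * \det (B - 2%:P *: (u *m v)) by rewrite -det_mulmx hd detZ.
have hmain : lam * char_poly (2%:R *: Jmat N - A) = \det B * (lam - 2%:P * N%:R).
  rewrite /char_poly hC.
  apply: (mulfI (expf_neq0 N lam_neq0)).
  by rewrite [LHS]mulrCA -hdet [LHS]mulrCA hsyl [LHS]mulrCA.
pose q := - 'X - 2%:P : {poly algC}.
have hq : map_mx (comp_poly q) (char_poly_mx A) = - B.
  apply/matrixP => i j; rewrite !mxE.
  case: eqVneq => [->|hij] /=; rewrite ?mulr1n ?mulr0n comp_polyB ?comp_polyX comp_polyC ?rmorph0 /q; ring.
have hdetB : \det (- B) = char_poly A \Po q by rewrite -hq det_map_mx.
have hsize : N = (size s).+1.
  have := size_char_poly A; rewrite hA size_Mmonic ?monic_prod_XsubC ?size_XsubC ?size_prod_XsubC //.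
    by move=> [].
  by rewrite -size_poly_eq0 size_XsubC.
have e1 : (-1) ^+ N * \det B = (q - D%:P) * ((-1) ^+ size s * \prod_(e <- s) ('X - ((- 2%:R : algC) - e)%:P)).
  rewrite -detZ scaleN1r hdetB hA comp_polyM comp_polyB comp_polyX comp_polyC rmorph_prod /=.
  under eq_bigr do rewrite comp_polyB comp_polyX comp_polyC.
  by rewrite /q prod_sgn.
have hBv : \det B = lam * \prod_(e <- s) ('X - ((- 2%:R : algC) - e)%:P).
  apply: (@mulfI _ ((-1) ^+ N)); first by rewrite signr_eq0.
  rewrite e1 hsize exprS -signr_odd /q /lam.
  rewrite rmorphD /=.
  by case: (odd (size s)); rewrite /= ?expr0 ?expr1; ring.
rewrite hBv in hmain.
apply: (mulfI lam_neq0); rewrite hmain /lam.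
rewrite !(rmorphB, rmorphD, rmorphM, rmorph1, rmorph_nat) /=.
ring.
Qed.

Theorem proposition3p2 (n : nat) (hn : (4 <= n)%N) :
  dmat n = 2%:R *: Jmat #|{perm 'I_n}| - Amat n
  /\ (forall s : seq algC,
        char_poly (Amat n) = ('X - (#|Dset n|)%:R%:P) * \prod_(e <- s) ('X - e%:P) ->
        char_poly (dmat n) =
          ('X - (2%:R * ((n`!)%:R - 1) - (#|Dset n|)%:R)%:P)
            * \prod_(e <- s) ('X - ((- 2%:R : algC) - e)%:P))
  /\ gamma_char (0 : Iirr (SG n)) = 2%:R * ((n`!)%:R - 1) - (#|Dset n|)%:R
  /\ (forall i : Iirr (SG n), i != 0 -> gamma_char i = (- 2%:R : algC) - eta_char i).
Proof.
split; first exact: dmat_eq.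
split.
  move=> s hs; rewrite dmat_eq // (charpoly_main (@rowsumA n) hs).
  by rewrite card_Sn.
split; first exact: gamma0.
exact: gammai.
Qed.
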